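(* Let $\mathcal{F}=\{f_i\}_{i=1}^N$ be a frame for $\mathbb{R}^n$. Then $d(\mathcal{F})$ is the largest integer $k$ such that there exists a $k$-dimensional maximal $\mathcal{F}$-PR subspace.
   Context: A frame for $\mathbb{R}^n$ is a finite spanning sequence. For $\Lambda\subseteq\{1,\dots,N\}$ let $\mathcal{F}_\Lambda=\{f_i\}_{i\in\Lambda}$, $\Lambda^c$ its complement, and $d_\Lambda=\max\{\dim\mathrm{span}(\mathcal{F}_\Lambda),\dim\mathrm{span}(\mathcal{F}_{\Lambda^c})\}$; define $d(\mathcal{F})=\min\{d_\Lambda:\Lambda\subseteq\{1,\dots,N\}\}$. A finite sequence $\{g_i\}$ in a subspace $M$ is a phase-retrievable frame for $M$ if it spans $M$ and $|\langle x,g_i\rangle|=|\langle y,g_i\rangle|$ for all $i$ with $x,y\in M$ implies $x=\pm y$. A subspace $M$ is an $\mathcal{F}$-PR subspace if $\{P_Mf_i\}_{i=1}^N$ is a phase-retrievable frame for $M$, where $P_M$ is the orthogonal projection onto $M$; it is maximal if it is not a proper subspace of another $\mathcal{F}$-PR subspace. *)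

(* Defs.v *)
(* Vectors of R^n are row vectors 'rV[R]_n; a subspace M of
   R^n is represented by a square matrix 'M[R]_n through its row space. *)
From HB Require Import structures.
From mathcomp Require Import all_boot all_order all_algebra.
From mathcomp Require Import reals.
Set Implicit Arguments. Unset Strict Implicit. Unset Printing Implicit Defensive.
Import Order.TTheory GRing.Theory Num.Theory.
Local Open Scope ring_scope.

Section Defs.
Variables (R : realType) (n N : nat).

Definition dotv (u v : 'rV[R]_n) : R := (u *m v^T) 0 0.

Definition fspan (f : 'I_N -> 'rV[R]_n) (L : {set 'I_N}) : 'M[R]_n :=
  (\sum_(i in L) <<f i>>)%MS.

Definition is_frame (f : 'I_N -> 'rV[R]_n) : Prop :=
  \rank (fspan f setT) = n.

(* d_Lambda and d(F) = min over all Lambda of d_Lambda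
   (every d_Lambda is <= n, so the default n of the iterated min is harmless) *)
Definition dLam (f : 'I_N -> 'rV[R]_n) (L : {set 'I_N}) : nat :=
  maxn (\rank (fspan f L)) (\rank (fspan f (~: L))).

Definition dF (f : 'I_N -> 'rV[R]_n) : nat :=
  \big[minn/n]_(L : {set 'I_N}) dLam f L.

(* orthogonal projection onto (the row space of) M: projection onto M
   along its orthogonal complement M^perp = kermx M^T *)
Definition oproj (M : 'M[R]_n) (v : 'rV[R]_n) : 'rV[R]_n :=
  v *m proj_mx <<M>>%MS (kermx M^T).

Definition PR_frame_for (M : 'M[R]_n) (g : 'I_N -> 'rV[R]_n) : Prop :=
  (fspan g setT == M)%MS /\
  forall x y : 'rV[R]_n, (x <= M)%MS -> (y <= M)%MS ->
    (forall i, `|dotv x (g i)| = `|dotv y (g i)|) -> x = y \/ x = - y.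

Definition is_FPR (f : 'I_N -> 'rV[R]_n) (M : 'M[R]_n) : Prop :=
  PR_frame_for M (fun i => oproj M (f i)).

Definition maximal_FPR (f : 'I_N -> 'rV[R]_n) (M : 'M[R]_n) : Prop :=
  is_FPR f M /\ forall M' : 'M[R]_n, is_FPR f M' -> ~~ (M < M')%MS.

End Defs.

(* Main.v *)
Require Import Defs.
From HB Require Import structures.
From mathcomp Require Import all_boot all_order all_algebra.
From mathcomp Require Import reals.
From mathcomp Require Import lra zify.
Import Order.TTheory GRing.Theory Num.Theory.
Local Open Scope ring_scope.
Set Implicit Arguments. Unset Strict Implicit.

Lemma dotvC (R : realType) n (u v : 'rV[R]_n) : dotv u v = dotv v u.
Proof.
rewrite /dotv; have -> : (v *m u^T) = (u *m v^T)^T by rewrite trmx_mul trmxK.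
by rewrite [in RHS]mxE.
Qed.

Lemma dotvDl (R : realType) n (x y v : 'rV[R]_n) :
  dotv (x + y) v = dotv x v + dotv y v.
Proof. by rewrite /dotv mulmxDl mxE. Qed.

Lemma dotvNl (R : realType) n (x v : 'rV[R]_n) : dotv (- x) v = - dotv x v.
Proof. by rewrite /dotv mulNmx mxE. Qed.

Lemma dotvBl (R : realType) n (x y v : 'rV[R]_n) :
  dotv (x - y) v = dotv x v - dotv y v.
Proof. by rewrite dotvDl dotvNl. Qed.

Lemma dotv_ker (R : realType) n m (B : 'M[R]_(m, n)) (u v : 'rV[R]_n) :
  (u <= kermx B^T)%MS -> (v <= B)%MS -> dotv u v = 0.
Proof.
move=> /sub_kermxP Hu /submxP [D ->].
by rewrite /dotv trmx_mul mulmxA Hu mul0mx mxE.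
Qed.

Lemma dotv_self0 (R : realType) n (u : 'rV[R]_n) : dotv u u = 0 -> u = 0.
Proof.
move=> H; have Hs : \sum_(j < n) u 0 j * u 0 j = 0.
  rewrite -[RHS]H /dotv mxE; apply: eq_bigr => j _; by rewrite [u^T _ _]mxE.
apply/matrixP => i j; rewrite (ord1 i) mxE.
have H0 : forall j, 0 <= u 0 j * u 0 j by move=> k; rewrite -expr2 sqr_ge0.
have := @psumr_eq0P _ _ predT (fun j => u 0 j * u 0 j) (fun j _ => H0 j) Hs j isT.
by move/eqP; rewrite mulf_eq0 orbb => /eqP.
Qed.

Lemma orth0 (R : realType) n m (A : 'M[R]_(m, n)) (u : 'rV[R]_n) :
  (u <= A)%MS -> (u <= kermx A^T)%MS -> u = 0.
Proof. by move=> H1 H2; apply: dotv_self0; apply: dotv_ker H2 H1. Qed.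

Lemma orth0M (R : realType) n m p (A : 'M[R]_(m, n)) (C : 'M[R]_(p, n)) :
  (C <= A)%MS -> (C <= kermx A^T)%MS -> C = 0.
Proof.
move=> H1 H2; apply/row_matrixP => i; rewrite row0.
by apply: (orth0 (A := A)); apply: submx_trans (row_sub i C) _.
Qed.

Lemma capK0 (R : realType) n (M : 'M[R]_n) : (<<M>> :&: kermx M^T = 0)%MS.
Proof.
apply: (orth0M (A := M)).
  by apply: submx_trans (capmxSl _ _) _; rewrite genmxE.
exact: capmxSr.
Qed.

Lemma sum_full (R : realType) n (M : 'M[R]_n) (v : 'rV[R]_n) :
  (v <= <<M>> + kermx M^T)%MS.
Proof.
apply: submx_full; rewrite /row_full.
have := mxrank_sum_cap <<M>>%MS (kermx M^T).
rewrite capK0 mxrank0 addn0 mxrank_ker mxrank_tr genmxE => ->.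
by rewrite subnKC ?rank_leq_col.
Qed.

Lemma oproj_sub (R : realType) n (M : 'M[R]_n) (v : 'rV[R]_n) :
  (oproj M v <= M)%MS.
Proof. by apply: submx_trans (proj_mx_sub _ _ _) _; rewrite genmxE. Qed.

Lemma oproj_dot (R : realType) n (M : 'M[R]_n) (x v : 'rV[R]_n) :
  (x <= M)%MS -> dotv x (oproj M v) = dotv x v.
Proof.
move=> Hx.
have H := proj_mx_compl_sub (sum_full M v).
have H0 : dotv (v - oproj M v) x = 0 by apply: dotv_ker H Hx.
rewrite dotvBl in H0.
by rewrite dotvC (dotvC x v); apply/eqP; rewrite eq_sym -subr_eq0 H0.
Qed.

Lemma exists_orth (R : realType) n (A M : 'M[R]_n) :
  (\rank A < \rank M)%N ->
  exists u : 'rV[R]_n, [/\ (u <= M)%MS, (u <= kermx A^T)%MS & u != 0].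
Proof.
move=> Hr.
set C := (M :&: kermx A^T)%MS.
have Hs := mxrank_sum_cap M (kermx A^T).
rewrite mxrank_ker mxrank_tr in Hs.
have H1 := rank_leq_col (M + kermx A^T)%MS.
have H2 := rank_leq_col A.
have HC : (0 < \rank C)%N by rewrite /C; lia.
case: (pickP (fun i => row i C != 0)) => [i Hi | H].
  exists (row i C); split => //.
    exact: submx_trans (row_sub i C) (capmxSl _ _).
  exact: submx_trans (row_sub i C) (capmxSr _ _).
have : C = 0.
  by apply/row_matrixP => i; rewrite row0; move: (H i) => /= /negbFE /eqP.
by move=> HC0; rewrite HC0 mxrank0 in HC.
Qed.

Definition moment (R : realType) n (t : R) : 'rV[R]_n := \row_(j < n) t ^+ j.
Definition polyof (R : realType) n (a : 'rV[R]_n) : {poly R} :=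
  \sum_(j < n) (a 0 j)%:P * 'X^j.

Lemma polyof_horner (R : realType) n (a : 'rV[R]_n) t :
  (polyof a).[t] = dotv a (moment n t).
Proof.
rewrite /polyof horner_sum /dotv mxE; apply: eq_bigr => j _.
by rewrite hornerCM hornerXn !mxE.
Qed.

Lemma polyof_neq0 (R : realType) n (a : 'rV[R]_n) : a != 0 -> polyof a != 0.
Proof.
move=> Ha.
have [j Hj] : exists j, a 0 j != 0.
  apply/existsP; apply: contraNT Ha => /existsPn H.
  by apply/eqP/matrixP => i k; rewrite (ord1 i) mxE; apply/eqP/negPn/H.
apply: contraNneq Hj => Hp.
have : (polyof a)`_j = a 0 j.
  rewrite /polyof coef_sum (bigD1 j) //= coefCM coefXn eqxx mulr1 big1 ?addr0 //.
  by move=> k Hk; rewrite coefCM coefXn; case: eqP => [/val_inj E|]; [by rewrite E eqxx in Hk | rewrite mulr0].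
by rewrite Hp coef0 => <-.
Qed.

Lemma nonroot (R : realType) (p : {poly R}) : p != 0 -> exists t, p.[t] != 0.
Proof.
move=> Hp.
set rs := [seq (i%:R : R) | i <- iota 0 (size p)].
case: (boolP (all (root p) rs)) => [Hall | /allPn [x _ Hx]].
  have Hu : uniq rs.
    rewrite map_inj_uniq ?iota_uniq // => x y /eqP; by rewrite eqr_nat => /eqP.
  have := max_poly_roots Hp Hall Hu.
  by rewrite size_map size_iota ltnn.
by exists x.
Qed.

Lemma avoid_poly (R : realType) n (s : seq 'M[R]_n) :
  all (fun U => \rank U < n)%N s ->
  exists P : {poly R}, P != 0 /\
    forall t, P.[t] != 0 -> all (fun U => ~~ (moment n t <= U)%MS) s.
Proof.
elim: s => [|U s IH] /=; first by move=> _; exists 1; split => //; rewrite oner_eq0.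
move=> /andP [HU Hs]; have [P [HP HPt]] := IH Hs.
have Hr : (\rank U < \rank (1%:M : 'M[R]_n))%N by rewrite mxrank1.
have [a [_ Ha Ha0]] := exists_orth Hr.
exists (polyof a * P); split; first by rewrite mulf_neq0 // polyof_neq0.
move=> t; rewrite hornerM mulf_eq0 negb_or => /andP [H1 H2].
rewrite HPt // andbT; apply: contra H1 => Hm.
by rewrite polyof_horner (dotv_ker Ha Hm).
Qed.

Lemma avoid (R : realType) n (s : seq 'M[R]_n) :
  all (fun U => \rank U < n)%N s ->
  exists v : 'rV[R]_n, all (fun U => ~~ (v <= U)%MS) s.
Proof.
move=> Hs; have [P [HP HPt]] := avoid_poly Hs.
have [t Ht] := nonroot HP.
by exists (moment n t); apply: HPt.
Qed.

Lemma rank_add1 (R : realType) n (A : 'M[R]_n) (v : 'rV[R]_n) :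
  ~~ (v <= A)%MS -> \rank (A + v)%MS = (\rank A).+1.
Proof.
move=> Hv.
have Hv0 : v != 0 by apply: contraNneq Hv => ->; rewrite sub0mx.
have := mxrank_sum_cap A v; rewrite rank_rV Hv0.
have Hc : \rank (A :&: v)%MS = 0%N.
  have Hle : (\rank (A :&: v)%MS <= \rank v)%N := mxrankS (capmxSr A v).
  rewrite rank_rV Hv0 in Hle.
  case Hc1: (\rank (A :&: v)%MS == 1%N); last by lia.
  have : (v <= A :&: v)%MS.
    by rewrite -(mxrank_leqif_sup (capmxSr A v)) rank_rV Hv0 (eqP Hc1).
  by rewrite sub_capmx (negbTE Hv).
by rewrite Hc addn0 addn1.
Qed.

Lemma grow (R : realType) n d (s : seq 'M[R]_n) :
  (d <= n)%N -> all (fun U => \rank U <= n - d)%N s ->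
  forall k, (k <= d)%N ->
  exists W : 'M[R]_n, \rank W = k /\ all (fun U => \rank (W :&: U)%MS == 0%N) s.
Proof.
move=> Hdn Hs; elim => [_|k IH Hk].
  exists 0; rewrite mxrank0; split => //; apply/allP => U _.
  by rewrite cap0mx mxrank0.
have [W [HW HWs]] := IH (ltnW Hk).
have HWU : forall U, U \in s -> \rank (W + U)%MS = (k + \rank U)%N.
  move=> U HU; have := mxrank_sum_cap W U.
  by move/allP: HWs => /(_ U HU) /eqP ->; rewrite addn0 HW.
have Hall : all (fun U => \rank U < n)%N (W :: [seq (W + U)%MS | U <- s]).
  rewrite /= HW; apply/andP; split.
    by apply: leq_trans Hk Hdn.
  apply/allP => X /mapP [U HU ->]; rewrite HWU //.
  move/allP: Hs => /(_ U HU) HU'.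
  lia.
have [v Hv] := avoid Hall.
move: Hv => /= /andP [HvW Hvs].
exists (W + v)%MS; split; first by rewrite rank_add1 // HW.
apply/allP => U HU.
have Hr1 : \rank ((W + v) + U)%MS = (\rank (W + U)%MS).+1.
  rewrite -addsmxA (addsmxC v U) addsmxA rank_add1 //.
  by move/allP: Hvs; apply; apply: map_f.
have := mxrank_sum_cap (W + v)%MS U.
rewrite Hr1 rank_add1 // HW HWU // => /eqP.
move=> E; apply/eqP; lia.
Qed.

Lemma fspan_sub (R : realType) n N (f : 'I_N -> 'rV[R]_n) (L : {set 'I_N}) i :
  i \in L -> (f i <= fspan f L)%MS.
Proof. by move=> Hi; rewrite /fspan (sumsmx_sup i) // genmxE. Qed.

Lemma ker_fspan (R : realType) n N (f : 'I_N -> 'rV[R]_n) (L : {set 'I_N}) z i :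
  (z <= kermx (fspan f L)^T)%MS -> i \in L -> dotv z (f i) = 0.
Proof. by move=> Hz Hi; apply: dotv_ker Hz (fspan_sub f Hi). Qed.

Lemma orth_fspan (R : realType) n N (f : 'I_N -> 'rV[R]_n) (L : {set 'I_N}) z :
  (forall i, i \in L -> dotv z (f i) = 0) -> (z <= kermx (fspan f L)^T)%MS.
Proof.
move=> H; apply/sub_kermxP.
have HF : (fspan f L <= kermx z^T)%MS.
  apply/sumsmx_subP => i Hi; rewrite genmxE; apply/sub_kermxP.
  apply/matrixP => a b; rewrite (ord1 a) (ord1 b) [RHS]mxE.
  by have := H i Hi; rewrite dotvC.
move/sub_kermxP: HF => HF.
by rewrite -[z]trmxK -trmx_mul HF trmx0.
Qed.

Lemma dLam_le_n (R : realType) n N (f : 'I_N -> 'rV[R]_n) (L : {set 'I_N}) : (dLam f L <= n)%N.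
Proof. by rewrite /dLam geq_max !rank_leq_col. Qed.

Lemma dF_le (R : realType) n N (f : 'I_N -> 'rV[R]_n) (L : {set 'I_N}) : (dF f <= dLam f L)%N.
Proof.
rewrite /dF; have : L \in index_enum {set 'I_N} by rewrite mem_index_enum.
elim: (index_enum _) => // a r IH; rewrite in_cons big_cons.
case/orP => [/eqP <-|/IH H]; first exact: geq_minl.
by apply: leq_trans (geq_minr _ _) H.
Qed.

Lemma le_dF (R : realType) n N (f : 'I_N -> 'rV[R]_n) k :
  (forall L, k <= dLam f L)%N -> (k <= n)%N -> (k <= dF f)%N.
Proof.
move=> H Hn; rewrite /dF; elim/big_rec: _ => // L m _ Hm.
by rewrite leq_min H Hm.
Qed.

Lemma FPR_le (R : realType) n N (f : 'I_N -> 'rV[R]_n) (M : 'M[R]_n) :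
  is_FPR f M -> (\rank M <= dF f)%N.
Proof.
move=> [_ HPR]; apply: le_dF; last exact: rank_leq_col.
move=> L; rewrite leqNgt; apply/negP; rewrite /dLam gtn_max => /andP [H1 H2].
have [u [HuM Hu Hu0]] := exists_orth H1.
have [v [HvM Hv Hv0]] := exists_orth H2.
have Hx : ((u + v)%R <= M)%MS by apply: (addmx_sub (C:=M)).
have Hy : ((u - v)%R <= M)%MS by apply: (addmx_sub (C:=M)) => //; rewrite eqmx_opp.
have := HPR (u + v) (u - v) Hx Hy.
case.
  move=> i; rewrite /= !oproj_dot // dotvDl dotvBl.
  case: (boolP (i \in L)) => Hi.
    by rewrite (ker_fspan Hu Hi) add0r sub0r normrN.
  have Hi' : i \in ~: L by rewrite in_setC.
  by rewrite (ker_fspan Hv Hi') addr0 subr0.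
  move=> E; move/negP: Hv0; apply; apply/eqP/matrixP => i j.
  have := congr1 (fun m : 'rV[R]_n => m i j) E; rewrite /= !mxE; lra.
move=> E; move/negP: Hu0; apply; apply/eqP/matrixP => i j.
have := congr1 (fun m : 'rV[R]_n => m i j) E; rewrite /= !mxE; lra.
Qed.

Lemma exists_FPR (R : realType) n N (f : 'I_N -> 'rV[R]_n) :
  is_frame f -> exists M : 'M[R]_n, is_FPR f M /\ \rank M = dF f.
Proof.
move=> Hfr.
set d := dF f.
pose side (L : {set 'I_N}) := if (d <= \rank (fspan f L))%N then L else ~: L.
pose s := [seq kermx (fspan f (side L))^T | L <- enum {set 'I_N}].
have Hdn : (d <= n)%N := leq_trans (dF_le f setT) (dLam_le_n f setT).
have Hs : all (fun U => \rank U <= n - d)%N s.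
  apply/allP => U /mapP [L _ ->]; rewrite mxrank_ker mxrank_tr.
  have : (d <= \rank (fspan f (side L)))%N.
    rewrite /side; case: ifP => // /negbT; rewrite -ltnNge => H.
    have := dF_le f L; rewrite /dLam -/d => H'.
    by move: H'; rewrite leq_max leqNgt H /=.
  lia.
have [W [HW HWs]] := grow Hdn Hs (leqnn d).
have Hside : forall L (z : 'rV[R]_n), (z <= W)%MS -> (z <= kermx (fspan f (side L))^T)%MS -> z = 0.
  move=> L z Hz1 Hz2.
  have Hin : kermx (fspan f (side L))^T \in s by apply: map_f; rewrite mem_enum.
  move/allP: HWs => /(_ _ Hin); rewrite mxrank_eq0 => /eqP Hc.
  by apply/eqP; rewrite -submx0 -Hc sub_capmx Hz1 Hz2.
exists W; split => //; split.
  have HGW : (fspan (fun i => oproj W (f i)) setT <= W)%MS.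
    by apply/sumsmx_subP => i _; rewrite genmxE oproj_sub.
  apply/andP; split => //.
  rewrite -(mxrank_leqif_sup HGW).
  apply/negPn/negP => Hne.
  have Hlt : (\rank (fspan (fun i => oproj W (f i)) setT) < \rank W)%N.
    by rewrite ltn_neqAle Hne mxrankS.
  have [u [HuW Hu Hu0]] := exists_orth Hlt.
  move/negP: Hu0; apply; apply/eqP.
  have Hk : (u <= kermx (fspan f setT)^T)%MS.
    apply: orth_fspan => i _; rewrite -(oproj_dot (f i) HuW).
    exact: (ker_fspan Hu (in_setT i)).
  apply: orth0 Hk; apply: submx_full; exact/eqP.
move=> x y Hx Hy Habs.
have {}Habs : forall i, `|dotv x (f i)| = `|dotv y (f i)|.
  by move=> i; rewrite -(oproj_dot (f i) Hx) -(oproj_dot (f i) Hy).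
set L := [set i | dotv x (f i) == dotv y (f i)].
have := Hside L; rewrite /side; case: ifP => _ HS.
  left; apply/eqP; rewrite -subr_eq0; apply/eqP; apply: HS.
    by apply: (addmx_sub (C:=W)) => //; rewrite eqmx_opp.
  apply: orth_fspan => i; rewrite inE => /eqP E.
  by rewrite dotvBl E subrr.
right; apply/eqP; rewrite -addr_eq0; apply/eqP; apply: HS.
  exact: (addmx_sub (C:=W)).
apply: orth_fspan => i; rewrite !inE => Hne.
have /eqP := Habs i; rewrite eqr_norm2 (negbTE Hne) /= => /eqP E.
by rewrite dotvDl E addNr.
Qed.

Unset Implicit Arguments.

Theorem theorem3p2 (R : realType) (n N : nat) (f : 'I_N -> 'rV[R]_n) :
  is_frame f ->
  (exists M : 'M[R]_n, maximal_FPR f M /\ \rank M = dF f) /\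
  (forall M : 'M[R]_n, maximal_FPR f M -> (\rank M <= dF f)%N).
Proof.
move=> Hfr; split; last by move=> M [HM _]; apply: FPR_le.
have [M [HM HrM]] := exists_FPR Hfr.
exists M; split => //; split => // M' HM'.
rewrite ltmxErank; apply/negP => /andP [_ Hlt].
have := FPR_le HM'; rewrite -HrM leqNgt Hlt //.
Qed.
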